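(* Let $\hat y_1,\dots,\hat y_n\in\mathbb R$ be predictions, let $y_1,\dots,y_n\in\{-1,1\}$ be labels, let $\mathcal I^+=\{i: y_i=1\}$ and $\mathcal I^-=\{i:y_i=-1\}$, and let $m\ge 0$. Let $\ell(z)=(m-z)_+^2$ be the squared hinge loss, where $(z)_+=\max(z,0)$. Define $v_i=\hat y_i+m\,I[y_i=-1]$ for $i=1,\dots,n$ (where $I[\cdot]$ is $1$ if the condition holds and $0$ otherwise), and let $s_1,\dots,s_n$ be a permutation of $\{1,\dots,n\}$ with $v_{s_1}\le\cdots\le v_{s_n}$. Set $a_0=b_0=c_0=L_0=0$ and for $i=1,\dots,n$ define recursively $$a_i=a_{i-1}+I[y_{s_i}=1],\quad b_i=b_{i-1}+I[y_{s_i}=1]\,2(m-\hat y_{s_i}),\quad c_i=c_{i-1}+I[y_{s_i}=1]\,(m-\hat y_{s_i})^2,$$ $$L_i=L_{i-1}+I[y_{s_i}=-1]\left(a_i\hat y_{s_i}^2+b_i\hat y_{s_i}+c_i\right).$$ Then $$\sum_{k\in\mathcal I^-}\sum_{j\in\mathcal I^+}\ell(\hat y_j-\hat y_k)=L_n.$$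
   Context: $m$ is a margin hyper-parameter; the left-hand side is the all-pairs squared hinge loss summed over all pairs of a positively labeled and a negatively labeled example. *)

(* Defs.v *)
From mathcomp Require Import all_boot all_order all_algebra all_fingroup.
Set Implicit Arguments. Unset Strict Implicit. Unset Printing Implicit Defensive.
Import Order.TTheory GRing.Theory Num.Theory.
Local Open Scope ring_scope.

Definition pos_part {R : realDomainType} (z : R) : R := Num.max z 0.
Definition sq_hinge {R : realDomainType} (m z : R) : R := (pos_part (m - z)) ^+ 2.

Definition ind {R : realDomainType} (b : bool) : R := b%:R.

Definition vval {R : realDomainType} {n : nat} (m : R) (yh y : 'I_n -> R) (i : 'I_n) : R :=
  yh i + m * ind (y i == -1).

Definition abcL_step {R : realDomainType} {n : nat} (m : R) (yh y : 'I_n -> R)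
    (acc : R * R * R * R) (j : 'I_n) : R * R * R * R :=
  let: (a, b, c, L) := acc in
  let a' := a + ind (y j == 1) in
  let b' := b + ind (y j == 1) * (2%:R * (m - yh j)) in
  let c' := c + ind (y j == 1) * (m - yh j) ^+ 2 in
  let L' := L + ind (y j == -1) * (a' * yh j ^+ 2 + b' * yh j + c') in
  (a', b', c', L').

(* (a_n, b_n, c_n, L_n), starting from a_0 = b_0 = c_0 = L_0 = 0 and running
   over s_1, ..., s_n  (here s_i is s applied to the ordinal i-1). *)
Definition abcL_final {R : realDomainType} {n : nat} (m : R) (yh y : 'I_n -> R)
    (s : 'S_n) : R * R * R * R :=
  foldl (abcL_step m yh y) (0, 0, 0, 0) [seq s i | i <- enum 'I_n].

Definition L_final {R : realDomainType} {n : nat} (m : R) (yh y : 'I_n -> R)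
    (s : 'S_n) : R := (abcL_final m yh y s).2.

(* Main.v *)
Require Import Defs.
From mathcomp Require Import all_boot all_order all_algebra all_fingroup.
From mathcomp Require Import ring lra.
Import Order.TTheory GRing.Theory Num.Theory.
Local Open Scope ring_scope.

Lemma expand_sum (R : realFieldType) (a b : nat) (e f : nat -> R) (m X : R) :
  \sum_(a <= q < b) e q * (X + m - f q) ^+ 2 =
  (\sum_(a <= q < b) e q) * X ^+ 2 + (\sum_(a <= q < b) e q * (2%:R * (m - f q))) * X
  + \sum_(a <= q < b) e q * (m - f q) ^+ 2.
Proof.
rewrite !mulr_suml -!big_split /=; apply: eq_bigr => q _; ring.
Qed.

Lemma fold_eq (R : realFieldType) (n : nat) (m : R) (yh y : 'I_n -> R) (x0 : 'I_n)
   (r : seq 'I_n) :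
  foldl (abcL_step m yh y) (0,0,0,0) r =
  (\sum_(0 <= q < size r) ind (y (nth x0 r q) == 1),
   \sum_(0 <= q < size r) ind (y (nth x0 r q) == 1) * (2%:R * (m - yh (nth x0 r q))),
   \sum_(0 <= q < size r) ind (y (nth x0 r q) == 1) * (m - yh (nth x0 r q)) ^+ 2,
   \sum_(0 <= i < size r) ind (y (nth x0 r i) == -1) *
      \sum_(0 <= q < i.+1) ind (y (nth x0 r q) == 1) * (yh (nth x0 r i) + m - yh (nth x0 r q)) ^+ 2).
Proof.
elim/last_ind: r => [|r x IH]; first by rewrite /= !big_geq.
have Hn : forall q, (q < size r)%N -> nth x0 (rcons r x) q = nth x0 r q.
  by move=> q Hq; rewrite nth_rcons Hq.
have Hl : nth x0 (rcons r x) (size r) = x by rewrite nth_rcons ltnn eqxx.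
rewrite foldl_rcons IH /abcL_step size_rcons !big_nat_recr //= Hl.
have E : forall (F : 'I_n -> R), \sum_(0 <= q < size r) F (nth x0 (rcons r x) q)
   = \sum_(0 <= q < size r) F (nth x0 r q).
  by move=> F; apply: eq_big_nat => q /andP[_ Hq]; rewrite Hn.
rewrite (E (fun j => ind (y j == 1))).
rewrite (E (fun j => ind (y j == 1) * (2%:R * (m - yh j)))).
rewrite (E (fun j => ind (y j == 1) * (m - yh j) ^+ 2)).
congr (_, _, _, _ + _).
  apply: eq_big_nat => i /andP[_ Hi]; rewrite Hn //; congr (_ * _).
  apply: eq_big_nat => q /andP[_ Hq]; rewrite !Hn //; exact: leq_trans Hq Hi.
congr (_ * _).
rewrite (@expand_sum _ _ _ (fun q => ind (y (nth x0 (rcons r x) q) == 1))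
   (fun q => yh (nth x0 (rcons r x) q))).
rewrite /= ?Hl.
rewrite (E (fun j => ind (y j == 1))).
rewrite (E (fun j => ind (y j == 1) * (2%:R * (m - yh j)))).
rewrite (E (fun j => ind (y j == 1) * (m - yh j) ^+ 2)).
ring.
Qed.

Lemma inner_eq (R : realFieldType) (N i : nat) (G : nat -> R) : (i < N)%N ->
  \sum_(0 <= q < i.+1) G q = \sum_(q < N | (q <= i)%N) G q.
Proof.
move=> Hi; rewrite -(big_mkord (fun q => (q <= i)%N) G) (big_nat_widen _ _ N predT) //.
Qed.

Theorem theorem2 (R : realFieldType) (n : nat) (yh y : 'I_n -> R) (m : R)
    (s : 'S_n)
    (hy : forall i, y i = 1 \/ y i = -1)
    (hm : 0 <= m)
    (hs : forall i j : 'I_n, (i <= j)%N -> vval m yh y (s i) <= vval m yh y (s j)) :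
  \sum_(k < n | y k == -1) \sum_(j < n | y j == 1) sq_hinge m (yh j - yh k)
  = L_final m yh y s.
Proof.
case: n yh y s hy hs => [|n] yh y s hy hs.
  by rewrite !big_ord0 /L_final /abcL_final enum_ord0.
rewrite /L_final /abcL_final (@fold_eq _ _ m yh y ord0) /= size_map size_enum_ord.
have Hw : forall q : 'I_n.+1, nth ord0 [seq s i | i <- enum 'I_n.+1] q = s q.
  by move=> q; rewrite (nth_map ord0) ?size_enum_ord // nth_ord_enum.
rewrite big_mkord.
set w := nth ord0 _ in Hw *.
transitivity (\sum_(i < n.+1) ind (y (w i) == -1) *
   \sum_(q < n.+1 | (q <= i)%N) ind (y (w q) == 1) * (yh (w i) + m - yh (w q)) ^+ 2); last first.
  apply: eq_bigr => i _; congr (_ * _); symmetry; exact: inner_eq.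
rewrite big_mkcond [LHS](reindex_inj (@perm_inj _ s)) /=.
apply: eq_bigr => i _; rewrite !Hw.
have h1 : ((1 : R) == -1) = false.
  by apply/negbTE/eqP => h; lra.
case: eqP => Hi; last by rewrite /ind mul0r.
rewrite /ind mul1r.
rewrite big_mkcond [LHS](reindex_inj (@perm_inj _ s)) /= [RHS]big_mkcond /=.
apply: eq_bigr => q _; rewrite !Hw.
case: eqP => Hq; last by rewrite mul0r; case: ifP.
rewrite mul1r.
have vi : vval m yh y (s i) = yh (s i) + m by rewrite /vval Hi eqxx /ind mulr1.
have vq : vval m yh y (s q) = yh (s q) by rewrite /vval Hq h1 /ind mulr0 addr0.
rewrite /sq_hinge /pos_part.
case: leqP => Hqi.
  have := hs _ _ Hqi; rewrite vi vq => H.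
  rewrite max_l; last by lra.
  congr (_ ^+ 2); ring.
have := hs _ _ (ltnW Hqi); rewrite vi vq => H.
rewrite max_r; last by lra.
by rewrite expr2 mul0r.
Qed.
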